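(* Let $\mathcal{C}$ be a covering of a finite set $E$. For $x\in E$ let $N(x)=\bigcap\{K\in\mathcal{C}:x\in K\}$, and define $VH:2^E\to 2^E$ by $VH(X)=\bigcup\{N(x):x\in E,\ N(x)\cap X\neq\emptyset\}$. Then $VH$ is the closure operator of some matroid on $E$ if and only if $\{VH(\{x\}):x\in E\}$ forms a partition of $E$.
   Context: A covering of $E$ is a family of nonempty subsets of $E$ with union $E$. ''$\{VH(\{x\}):x\in E\}$ forms a partition'' means the distinct sets among the $VH(\{x\})$ are pairwise disjoint (their union is $E$ since $x\in VH(\{x\})$). The closure operator of a matroid with rank function $r$ is $cl(X)=\{a\in E:r(X\cup\{a\})=r(X)\}$. *)

(* Defs.v *)
From mathcomp Require Import all_boot.
Set Implicit Arguments. Unset Strict Implicit. Unset Printing Implicit Defensive.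

Definition matroid_rank (T : finType) (r : {set T} -> nat) : Prop :=
  [/\ (forall X : {set T}, r X <= #|X|),
      (forall X Y : {set T}, X \subset Y -> r X <= r Y) &
      (forall X Y : {set T}, r (X :|: Y) + r (X :&: Y) <= r X + r Y)].

Definition mclosure (T : finType) (r : {set T} -> nat) (X : {set T}) : {set T} :=
  [set a | r (a |: X) == r X].

Definition covering (T : finType) (C : {set {set T}}) : Prop :=
  (forall K, K \in C -> K != set0) /\ \bigcup_(K in C) K = [set: T].

Definition Nbhd (T : finType) (C : {set {set T}}) (x : T) : {set T} :=
  \bigcap_(K in C | x \in K) K.

Definition VH (T : finType) (C : {set {set T}}) (X : {set T}) : {set T} :=
  \bigcup_(x | Nbhd C x :&: X != set0) Nbhd C x.

(* Main.v *)
Require Import Defs.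
From mathcomp Require Import all_boot.
Set Implicit Arguments. Unset Strict Implicit. Unset Printing Implicit Defensive.

Section S.
Variable T : finType.
Variable C : {set {set T}}.

Lemma memN x : x \in Nbhd C x.
Proof. by rewrite /Nbhd; apply/bigcapP=> K /andP [_ ->]. Qed.

Lemma VH_def z X : (z \in VH C X) <->
  exists w y, [/\ y \in X, y \in Nbhd C w & z \in Nbhd C w].
Proof.
split.
  move/bigcupP=> [w Hw Hz]; move/set0Pn: Hw => [y /setIP [Hy1 Hy2]].
  by exists w, y.
move=> [w [y [H1 H2 H3]]]; apply/bigcupP; exists w => //.
by apply/set0Pn; exists y; apply/setIP.
Qed.

Lemma VH_U z X : z \in VH C X <-> exists2 y, y \in X & z \in VH C [set y].
Proof.
split.
  move/VH_def=> [w [y [H1 H2 H3]]]; exists y => //; apply/VH_def.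
  by exists w, y; rewrite inE.
move=> [y Hy Hz]; case/VH_def: Hz => w [y' [H1 H2 H3]]; apply/VH_def; exists w, y'.
by move: H1; rewrite inE => /eqP E; subst y'; split.
Qed.

Lemma VH_self x : x \in VH C [set x].
Proof. by apply/VH_def; exists x, x; rewrite inE memN. Qed.

Lemma VH0 : VH C set0 = set0.
Proof.
apply/setP=> z; rewrite inE; apply/negP=> /VH_def [w [y [H _ _]]].
by rewrite inE in H.
Qed.

Lemma rank_part (r : {set T} -> nat) : matroid_rank r -> mclosure r set0 = set0 ->
  partition [set mclosure r [set x] | x : T] [set: T].
Proof.
case=> R1 R2 R3 H0.
have r0 : r set0 = 0 by apply/eqP; rewrite -leqn0 (leq_trans (R1 _)) ?cards0.
have r1 a : r [set a] = 1.
  have : a \notin mclosure r set0 by rewrite H0 inE.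
  rewrite inE setU0 r0; have := R1 [set a]; rewrite cards1.
  by case: (r [set a]) => [|[|]].
have cl x z : (z \in mclosure r [set x]) = (r [set z; x] == 1).
  by rewrite inE r1.
have sym x z : r [set z; x] = r [set x; z] by rewrite setUC.
have tr x z y : r [set x; z] = 1 -> r [set z; y] = 1 -> r [set x; y] = 1.
  move=> Hxz Hzy.
  have := R3 [set x; z] [set z; y]; rewrite Hxz Hzy => H.
  have H1 : 1 <= r ([set x; z] :&: [set z; y]).
    rewrite -(r1 z); apply: R2; rewrite subsetI !sub1set !inE !eqxx.
    by rewrite orbT.
  have H2 : r ([set x; z] :|: [set z; y]) <= 1.
    by rewrite -(leq_add2r (r ([set x; z] :&: [set z; y]))) (leq_trans H) // leq_add2l.
  apply/eqP; rewrite eqn_leq; apply/andP; split.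
    apply: leq_trans H2; apply: R2.
    by rewrite subUset !sub1set !inE !eqxx /= ?orbT.
  by rewrite -(r1 x); apply: R2; rewrite sub1set !inE eqxx.
apply/and3P; split.
- apply/eqP/setP=> z; rewrite inE; apply/bigcupP.
  exists (mclosure r [set z]); first by apply: imset_f.
  by rewrite inE setUid.
- apply/trivIsetP=> A B /imsetP [x _ ->] /imsetP [y _ ->] neq.
  rewrite -setI_eq0; apply: contraR neq => /set0Pn [w /setIP [Hw1 Hw2]].
  rewrite cl in Hw1; rewrite cl in Hw2; move/eqP: Hw1 => Hw1; move/eqP: Hw2 => Hw2.
  have Hxy : r [set x; y] = 1 by apply: (tr x w y) => //; rewrite sym.
  apply/eqP/setP=> z; rewrite !cl; apply/eqP/eqP=> Hz.
    by apply: (tr z x y).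
  by apply: (tr z y x) => //; rewrite sym.
- apply/imsetP=> [[x _ H]].
  have : x \in mclosure r [set x] by rewrite inE setUid.
  by rewrite -H inE.
Qed.

End S.

Theorem theorem11 (T : finType) (C : {set {set T}}) :
  covering C ->
  ((exists r : {set T} -> nat,
       matroid_rank r /\ forall X : {set T}, VH C X = mclosure r X)
   <-> partition [set VH C [set x] | x : T] [set: T]).
Proof.
move=> _; split.
  move=> [r [Hr HX]].
  have -> : [set VH C [set x] | x : T] = [set mclosure r [set x] | x : T].
    by apply: eq_imset => x; rewrite HX.
  by apply: rank_part => //; rewrite -HX VH0.
move=> P; set f := fun x => VH C [set x].
exists (fun X : {set T} => #|f @: X|); split.
  split.
  - by move=> X; apply: leq_imset_card.
  - by move=> X Y H; apply: subset_leq_card; apply: imsetS.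
  - move=> X Y; rewrite imsetU -(cardsUI (f @: X)) leq_add2l.
    by apply: subset_leq_card; rewrite subsetI !imsetS ?subsetIl ?subsetIr.
move=> X; apply/setP=> a; rewrite inE imsetU1 cardsU1.
case/and3P: P => _ Ht _.
case: (boolP (f a \in f @: X)) => H /=.
  rewrite add0n eqxx; case/imsetP: H => x Hx Hfx.
  by apply/VH_U; exists x => //; rewrite -/(f x) -Hfx VH_self.
have -> : (1 + #|f @: X| == #|f @: X|) = false.
  by apply/negbTE; rewrite add1n neq_ltn ltnSn orbT.
apply/negP=> /VH_U [x Hx Ha]; apply: (negP H); apply/imsetP; exists x => //.
apply/eqP; apply/negPn/negP=> neq.
have Pa : f a \in [set VH C [set x] | x : T] by apply/imsetP; exists a.
have Px : f x \in [set VH C [set x] | x : T] by apply/imsetP; exists x.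
have := trivIsetP Ht (f a) (f x) Pa Px neq.
rewrite -setI_eq0 => /eqP E.
have : a \in f a :&: f x by rewrite inE VH_self.
by rewrite E inE.
Qed.
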